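(* Let $\mathcal{S},\mathcal{A}$ be finite nonempty sets, $\lambda\in(0,1)$, $b>0$, $r_{sa}\ge 0$ for all $(s,a)$, let $\bm{\nu}$ be a stationary policy ($\bm{\nu}_s\in\Delta(\mathcal{A})$ for each $s$), and for each $(s,a)$ let $\mathcal{U}_{sa}\subseteq\Delta(\mathcal{S})$ be a nonempty set over which the minima below are attained. Define $\tilde T:\mathbb{R}^{\mathcal{S}}\to\mathbb{R}^{\mathcal{S}}$ by $$\tilde T(\bm{v})_s=\max_{\bm{\pi}_s\in\Delta(\mathcal{A})}\sum_{a\in\mathcal{A}}\pi_{sa}\Big(r_{sa}+\lambda\min_{\bm{p}\in\mathcal{U}_{sa}}\bm{p}^\top\bm{v}\Big)-\frac1b\,\mathrm{KL}(\bm{\pi}_s,\bm{\nu}_s),$$ and $\tilde t:(\mathbb{R}_{>0})^{\mathcal{S}}\to(\mathbb{R}_{>0})^{\mathcal{S}}$ by $\tilde t(\bm{x})_s=\sum_{a}\nu_{sa}\exp(b\,r_{sa})\min_{\bm{p}\in\mathcal{U}_{sa}}\prod_{s'}x_{s'}^{\lambda p_{s'}}$. Let $\tilde{\bm{v}}^\star$ be the unique fixed point of $\tilde T$. Then: (1) $\tilde{\bm{v}}^\star$ is an optimal solution of $\max\{\sum_{s\in\mathcal{S}}\exp(b\,v_s)\;:\;\bm{v}\le\tilde T(\bm{v}),\ \bm{v}\in\mathbb{R}^{\mathcal{S}}\}$. (2) The problem $\max\{\sum_{s\in\mathcal{S}}x_s\;:\;\bm{x}\le\tilde t(\bm{x}),\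 x_s\ge 1\ \forall s\in\mathcal{S}\}$ is a convex program (linear objective maximized over a closed convex set), and $\tilde{\bm{v}}^\star=\log_b(\tilde{\bm{x}}^\star)$ where $\tilde{\bm{x}}^\star$ is an optimal solution of this program and $\log_b(z)=\log(z)/b$ is applied componentwise.
   Context: $\Delta(\mathcal{X})$ is the probability simplex over a finite set $\mathcal{X}$; $\mathrm{KL}(\bm{\pi}_s,\bm{\nu}_s)=\sum_a\pi_{sa}\log(\pi_{sa}/\nu_{sa})$ (with $0\log 0=0$, and $+\infty$ if $\pi_{sa}>0=\nu_{sa}$). Vector inequalities are componentwise. $\tilde T$ is the entropy-regularized robust Bellman operator of an sa-rectangular robust MDP; it is a monotone $\ell_\infty$-contraction with modulus $\lambda$, so it has a unique fixed point. *)

(* Defs.v *)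
From HB Require Import structures.
From mathcomp Require Import all_boot all_order all_algebra.
From mathcomp Require Import all_classical all_reals all_analysis.
Set Implicit Arguments. Unset Strict Implicit. Unset Printing Implicit Defensive.
Import Order.TTheory GRing.Theory Num.Theory.
Import numFieldNormedType.Exports.
Local Open Scope classical_set_scope.
Local Open Scope ring_scope.

Section Defs.
Context {R : realType}.

Definition simplex (T : finType) (p : T -> R) : Prop :=
  (forall t, 0 <= p t) /\ \sum_(t : T) p t = 1.

Definition KL (T : finType) (pi nu : T -> R) : \bar R :=
  if [exists a, (0 < pi a) && (nu a == 0)] then +oo%E
  else (\sum_(a : T) (if pi a == 0 then 0 else pi a * ln (pi a / nu a)))%:E.

(** minimum over a set (via infimum; attainment assumed separately) *)
Definition setmin (T : Type) (U : set T) (f : T -> R) : R := inf [set f p | p in U].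

Definition dotp (T : finType) (p v : T -> R) : R := \sum_(t : T) p t * v t.

Definition Ttil (S A : finType) (lam b : R) (r nu : S -> A -> R)
  (U : S -> A -> set (S -> R)) (v : S -> R) (s : S) : R :=
  fine (ereal_sup [set ((\sum_(a : A) pi a * (r s a + lam * setmin (U s a) (fun p => dotp p v)))%:E
                        - (b^-1)%:E * KL pi (nu s))%E | pi in [set pi | simplex pi]]).

Definition ttil (S A : finType) (lam b : R) (r nu : S -> A -> R)
  (U : S -> A -> set (S -> R)) (x : S -> R) (s : S) : R :=
  \sum_(a : A) nu s a * expR (b * r s a) *
     setmin (U s a) (fun p => \prod_(s' : S) powR (x s') (lam * p s')).

End Defs.

(* Main.v *)
Require Import Defs.
From HB Require Import structures.
From mathcomp Require Import all_boot all_order all_algebra.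
From mathcomp Require Import all_classical all_reals all_analysis.
From mathcomp Require Import ring lra.
Import Order.TTheory GRing.Theory Num.Theory.
Import numFieldNormedType.Exports.
Local Open Scope classical_set_scope.
Local Open Scope ring_scope.


Section Aux.
Context {R : realType}.

Lemma ln_le_sub1 (y : R) : 0 < y -> ln y <= y - 1.
Proof.
move=> y0; have := @le_ln1Dx R (y - 1); rewrite addrCA subrr addr0; apply; lra.
Qed.

Lemma lnMdiv (n e z p : R) : 0 < n -> 0 < e -> 0 < z -> 0 < p ->
  ln (n * e / z / p) = ln n + ln e - ln z - ln p.
Proof.
move=> n0 e0 z0 p0.
rewrite ln_div ?posrE ?divr_gt0 ?mulr_gt0 // ln_div ?posrE ?mulr_gt0 //.
by rewrite lnM ?posrE.
Qed.

Lemma gibbs_upper (T : finType) (b : R) (hb : 0 < b) (nu : T -> R) (hnu : simplex nu)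
  (q : T -> R) (pi : T -> R) (hpi : simplex pi)
  (hac : ~~ [exists a, (0 < pi a) && (nu a == 0)]) :
  b * (\sum_a pi a * q a) - (\sum_(a : T) (if pi a == 0 then 0 else pi a * ln (pi a / nu a)))
  <= ln (\sum_a nu a * expR (b * q a)).
Proof.
case: hnu => nu0 nu1; case: hpi => pi0 pi1.
set Z := \sum_a nu a * expR (b * q a).
have Z0 : 0 < Z.
  rewrite lt_neqAle sumr_ge0 ?andbT => [|a _]; last by rewrite mulr_ge0 ?expR_ge0.
  apply/eqP => /esym/eqP; rewrite psumr_eq0 => [|a _]; last by rewrite mulr_ge0 ?expR_ge0.
  move=> /allP H; move: nu1; rewrite big1 => [/eqP|a _]; first by rewrite eq_sym oner_eq0.
  have := H a (mem_index_enum a); rewrite mulf_eq0 (gt_eqF (expR_gt0 _)) orbF; exact/eqP.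

pose w a := nu a * expR (b * q a) / Z.
have w1 : \sum_a w a = 1.
  by rewrite /w -mulr_suml divff // gt_eqF.
have -> : ln Z = \sum_a (w a - pi a + pi a * ln Z).
  by rewrite big_split /= big_split /= sumrN w1 pi1 -mulr_suml pi1 mul1r subrr add0r.
rewrite mulr_sumr -sumrB; apply: ler_sum => a _.
have wa0 : 0 <= w a by rewrite /w divr_ge0 ?mulr_ge0 ?expR_ge0 // ltW.
case: eqP => [->|/eqP pia]; first by rewrite !mul0r mulr0 subr0 subr0 addr0.
have pa : 0 < pi a by rewrite lt_neqAle eq_sym pia pi0.
have na : 0 < nu a.
  rewrite lt_neqAle nu0 andbT eq_sym; apply: contra hac => /eqP na.
  by apply/existsP; exists a; rewrite pa na eqxx.
have wp : 0 < w a / pi a by rewrite divr_gt0 ?divr_gt0 ?mulr_gt0 ?expR_gt0.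
have := @ln_le_sub1 _ wp.

rewrite /w lnMdiv ?expR_gt0 // expRK ln_div ?posrE // => h.
have := ler_wpM2l (ltW pa) h.
move=> h2.
have E2 : pi a * (nu a * expR (b * q a) / Z / pi a - 1) = nu a * expR (b * q a) / Z - pi a.
  by field; rewrite gt_eqF // andbT gt_eqF.
rewrite E2 in h2.
have E1 : b * (pi a * q a) - pi a * (ln (pi a) - ln (nu a)) =
  pi a * (ln (nu a) + b * q a - ln Z - ln (pi a)) + pi a * ln Z by ring.
rewrite E1; lra.
Qed.

Lemma sum_nu_pos (T : finType) (nu : T -> R) (hnu : simplex nu) (f : T -> R) :
  (forall a, 0 < f a) -> 0 < \sum_a nu a * f a.
Proof.
case: hnu => nu0 nu1 f0.
rewrite lt_neqAle sumr_ge0 ?andbT => [|a _]; last by rewrite mulr_ge0 // ltW.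
apply/eqP => /esym/eqP; rewrite psumr_eq0 => [|a _]; last by rewrite mulr_ge0 // ltW.
move=> /allP H; move: nu1; rewrite big1 => [/eqP|a _]; first by rewrite eq_sym oner_eq0.
have := H a (mem_index_enum a); rewrite mulf_eq0 (gt_eqF (f0 a)) orbF; exact/eqP.
Qed.

Lemma gibbs (T : finType) (b : R) (hb : 0 < b) (nu : T -> R) (hnu : simplex nu) (q : T -> R) :
  ereal_sup [set ((\sum_(a : T) pi a * q a)%:E - (b^-1)%:E * KL pi nu)%E | pi in [set pi | simplex pi]]
  = (ln (\sum_a nu a * expR (b * q a)) / b)%:E.
Proof.
set Z := \sum_a nu a * expR (b * q a).
have Z0 : 0 < Z by apply: sum_nu_pos => // a; exact: expR_gt0.
apply/eqP; rewrite eq_le; apply/andP; split.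
- apply: ge_ereal_sup => _ [pi hpi <-].
  rewrite /KL; case: ifPn => hac.
    by rewrite mulry gtr0_sg ?invr_gt0 // mul1e addeNy leNye.
  rewrite -EFinM -EFinB lee_fin.
  have h := @gibbs_upper T b hb nu hnu q pi hpi hac.
  rewrite -(ler_pM2l hb).
  set K := \sum_a _ in h *.
  have -> : b * (ln Z / b) = ln Z by field; rewrite gt_eqF.
  have -> : b * (\sum_a pi a * q a - b^-1 * K) = b * (\sum_a pi a * q a) - K.
    by field; rewrite gt_eqF.
  exact: h.
- case: (hnu) => nu0 nu1.
  pose ps a := nu a * expR (b * q a) / Z.
  have ps0 : forall a, 0 <= ps a by move=> a; rewrite /ps divr_ge0 ?mulr_ge0 ?expR_ge0 // ltW.
  have ps1 : \sum_a ps a = 1 by rewrite /ps -mulr_suml divff // gt_eqF.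
  apply: ereal_sup_ubound; exists ps => //.
  rewrite /KL ifF; last first.
    apply/negbTE/existsP => -[a /andP[h1 /eqP h2]].
    by move: h1; rewrite /ps h2 !mul0r ltxx.
  have -> : \sum_a (if ps a == 0 then 0 else ps a * ln (ps a / nu a)) =
            \sum_a ps a * (b * q a - ln Z).
    apply: eq_bigr => a _; case: eqP => [->|/eqP psa]; first by rewrite mul0r.
    have na : nu a != 0 by apply: contra psa => /eqP h; rewrite /ps h !mul0r.
    have -> : ps a / nu a = expR (b * q a) / Z by rewrite /ps; field; rewrite na gt_eqF.
    by rewrite ln_div ?posrE ?expR_gt0 // expRK.
  rewrite -EFinM -EFinB; congr (_%:E).
  have -> : \sum_a ps a * (b * q a - ln Z) = \sum_a (b * (ps a * q a) - ps a * ln Z).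
    by apply: eq_bigr => a _; ring.
  rewrite sumrB -mulr_sumr -mulr_suml ps1 mul1r.
  by field; rewrite gt_eqF.
Qed.
End Aux.


Section Top.
Context {R : realType} (S A : finType).

Lemma closed_ptws_le (f g : {ptws S -> R} -> R) :
  continuous f -> continuous g -> closed [set x | f x <= g x].
Proof.
move=> cf cg.
have -> : [set x | f x <= g x] = (fun x => f x - g x) @^-1` [set y : R | y <= 0].
  by apply/seteqP; split => x /=; rewrite subr_le0.
apply: preimage_closed; last exact: closed_le.
move=> x _; have h := continuousB (cf x) (cg x); exact: h.
Qed.

Lemma cont_proj (s : S) : continuous (fun x : {ptws S -> R} => x s).
Proof. exact: (@proj_continuous S (fun _ => R) s). Qed.

Lemma cont_lnmax s : continuous (fun y : {ptws S -> R} => ln (Num.max (y s) 1)).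
Proof.
move=> x.
have h1 : {for x, continuous (fun=> 1 : R)} by exact: (@cst_continuous {ptws S -> R} R 1 x).
have h2 : {for x, continuous (fun y : {ptws S -> R} => y s)} by exact: cont_proj.
have h := continuous_max h2 h1.
have h3 : {for (Num.max (x s) 1), continuous (@ln R)}.
  by apply: continuous_ln; rewrite lt_max ltr01 orbT.
exact: (continuous_comp h h3).
Qed.

Lemma cont_cM (c : R) (f : {ptws S -> R} -> R) : continuous f -> continuous (fun y => c * f y).
Proof.
move=> cf x.
have h1 : {for x, continuous (fun=> c : R)} by exact: (@cst_continuous {ptws S -> R} R c x).
have h := continuousM h1 (cf x); exact: h.
Qed.

Lemma cont_sum (I : finType) (F : I -> {ptws S -> R} -> R) :
  (forall i, continuous (F i)) -> continuous (fun y => \sum_i F i y).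
Proof.
move=> HF.
exact: (@continuous_big R I +%R 0 predT add_continuous {ptws S -> R} (index_enum I) F (fun i _ => HF i)).
Qed.

Lemma cont_expR (f : {ptws S -> R} -> R) : continuous f -> continuous (fun y => expR (f y)).
Proof.
move=> cf x; exact: (continuous_comp (cf x) (@continuous_expR R (f x))).
Qed.

Lemma cont_sumH (c : A -> R) (w : A -> S -> R) :
  continuous (fun x : {ptws S -> R} => \sum_a c a * expR (\sum_s w a s * ln (Num.max (x s) 1))).
Proof.
apply: (@cont_sum A (fun a (x : {ptws S -> R}) => c a * expR (\sum_s w a s * ln (Num.max (x s) 1)))) => a.
apply: cont_cM; apply: cont_expR.
apply: (@cont_sum S (fun s (x : {ptws S -> R}) => w a s * ln (Num.max (x s) 1))) => s.
apply: cont_cM; exact: cont_lnmax.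
Qed.
End Top.


Section Setmin.
Context {R : realType}.

Lemma setmin_min (T : Type) (V : set T) (f : T -> R) p0 :
  V p0 -> (forall q, V q -> f p0 <= f q) -> setmin V f = f p0.
Proof.
move=> Vp0 H; rewrite /setmin; apply/eqP; rewrite eq_le; apply/andP; split.
  apply: ge_inf; last by exists p0.
  by exists (f p0) => _ [q Vq <-]; exact: H.
apply: lb_le_inf; first by exists (f p0), p0.
by move=> _ [q Vq <-]; exact: H.
Qed.

Lemma setmin_le (T : Type) (V : set T) (f : T -> R) p :
  (forall q, V q -> 0 <= f q) -> V p -> setmin V f <= f p.
Proof.
move=> H Vp; rewrite /setmin; apply: ge_inf; last by exists p.
by exists 0 => _ [q Vq <-]; exact: H.
Qed.

End Setmin.
Arguments setmin_min {R T V f p0}.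
Arguments setmin_le {R T V f p}.

Section Model.
Context {R : realType} (S A : finType) (lam b : R) (hlam : 0 < lam < 1) (hb : 0 < b)
 (r : S -> A -> R) (hr : forall s a, 0 <= r s a) (nu : S -> A -> R) (hnu : forall s, simplex (nu s))
 (U : S -> A -> set (S -> R)) (hUsimp : forall s a p, U s a p -> simplex p)
 (hUmin1 : forall s a (v : S -> R),
      exists2 p, U s a p & forall q, U s a q -> dotp p v <= dotp q v).

Definition m (v : S -> R) s a := setmin (U s a) (fun p => dotp p v).
Definition Z (v : S -> R) s := \sum_a nu s a * expR (b * (r s a + lam * m v s a)).
Definition G (v : S -> R) s := ln (Z v s) / b.

Lemma TtilG v s : Ttil lam b r nu U v s = G v s.
Proof. by rewrite /Ttil gibbs. Qed.

Lemma m_min v s a : exists2 p, U s a p & m v s a = dotp p v.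
Proof.
have [p Up H] := hUmin1 s a v; exists p => //.
exact: setmin_min.
Qed.

Lemma dotp_le (p v w : S -> R) : simplex p -> (forall s, v s <= w s) -> dotp p v <= dotp p w.
Proof.
case=> p0 _ H; apply: ler_sum => s _; exact: ler_wpM2l.
Qed.

Lemma dotp_shift (p v : S -> R) c : simplex p -> dotp p (fun s => v s + c) = dotp p v + c.
Proof.
case=> _ p1; rewrite /dotp (eq_bigr (fun s => p s * v s + p s * c)); last by move=> *; rewrite mulrDr.
by rewrite big_split /= -mulr_suml p1 mul1r.
Qed.

Lemma m_mono v w s a : (forall s, v s <= w s) -> m v s a <= m w s a.
Proof.
move=> vw.
have [pv Uv Hv] := hUmin1 s a v; have [pw Uw Hw] := hUmin1 s a w.
rewrite /m (setmin_min Uv Hv) (setmin_min Uw Hw).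
apply: le_trans (Hv _ Uw) _; exact: dotp_le (hUsimp _ _ _ Uw) vw.
Qed.

Lemma m_shift v c s a : m (fun s => v s + c) s a = m v s a + c.
Proof.
have [pv Uv Hv] := hUmin1 s a v.
rewrite /m (setmin_min Uv Hv) (@setmin_min _ _ _ _ pv) //.
  exact: dotp_shift (hUsimp _ _ _ Uv).
by move=> q Uq; rewrite (dotp_shift _ _ _ (hUsimp _ _ _ Uq)) (dotp_shift _ _ _ (hUsimp _ _ _ Uv)) lerD2r Hv.
Qed.

Lemma Zpos v s : 0 < Z v s.
Proof. by apply: sum_nu_pos => // a; exact: expR_gt0. Qed.

Lemma G_mono v w s : (forall s, v s <= w s) -> G v s <= G w s.
Proof.
move=> vw; rewrite /G ler_pM2r ?invr_gt0 // ler_ln ?posrE ?Zpos //.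
apply: ler_sum => a _; rewrite ler_wpM2l //; first by case: (hnu s).
rewrite ler_expR ler_pM2l // lerD2l ler_wpM2l ?m_mono //.
by case/andP: hlam => /ltW.
Qed.

Lemma G_shift v c s : G (fun s => v s + c) s = G v s + lam * c.
Proof.
rewrite /G.
have -> : Z (fun s => v s + c) s = expR (b * lam * c) * Z v s.
  rewrite /Z mulr_sumr; apply: eq_bigr => a _.
  rewrite m_shift mulrCA -expRD; congr (_ * expR _); ring.
rewrite lnM ?posrE ?expR_gt0 ?Zpos // expRK.
by field; rewrite gt_eqF.
Qed.

Lemma G0 s : 0 <= G (fun=> 0) s.
Proof.
rewrite /G; apply: divr_ge0; last exact: ltW.
apply: ln_ge0.
case: (hnu s) => nu0 nu1; rewrite -nu1; apply: ler_sum => a _.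
rewrite -[X in X <= _]mulr1 ler_wpM2l //.
have [p Up ->] := m_min (fun=> 0) s a.
rewrite /dotp big1 ?mulr0 ?addr0 => [|t _]; last by rewrite mulr0.
apply: le_trans (expR_ge1Dx _); by rewrite lerDl mulr_ge0 ?hr // ltW.
Qed.


Lemma key (s0 : S) (vstar : S -> R) (hfix : forall s, G vstar s = vstar s)
  (v : S -> R) (hv : forall s, v s <= G v s) : forall s, v s <= vstar s.
Proof.
have [sm Hm] : exists sm, forall s, v s - vstar s <= v sm - vstar sm.
  case: (@arg_maxP _ _ _ s0 xpredT (fun s => v s - vstar s) isT) => sm _ H.
  by exists sm => s; exact: H.
set c := v sm - vstar sm.
case: (lerP c 0) => c0.
  by move=> s; have := Hm s; rewrite -/c; lra.
exfalso.
have H1 : forall s, v s <= vstar s + c by move=> s; have := Hm s; rewrite -/c; lra.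
have := hv sm.
have := @G_mono v (fun s => vstar s + c) sm H1; rewrite G_shift hfix => h1 h2.
have ce : c = v sm - vstar sm by [].
have h3 : c <= lam * c by lra.
case/andP: hlam => l0 l1; nra.
Qed.

Lemma vstar_ge0 (s0 : S) (vstar : S -> R) (hfix : forall s, G vstar s = vstar s) :
  forall s, 0 <= vstar s.
Proof. exact: (@key s0 vstar hfix (fun=> 0) G0). Qed.

Lemma ttil_exp v s : ttil lam b r nu U (fun s => expR (b * v s)) s = Z v s.
Proof.
rewrite /ttil /Z; apply: eq_bigr => a _.
have E : forall p, \prod_s' powR (expR (b * v s')) (lam * p s') = expR (b * lam * dotp p v).
  move=> p; rewrite /dotp mulr_sumr expR_sum; apply: eq_bigr => s' _.
  rewrite /powR gt_eqF ?expR_gt0 // expRK; congr expR; ring.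
have [pv Uv Hv] := hUmin1 s a v.
rewrite (@setmin_min _ _ _ _ pv) // ?E.
  rewrite /m (setmin_min Uv Hv) -mulrA -expRD; congr (_ * expR _); ring.
move=> q Uq; rewrite !E ler_expR ler_pM2l ?Hv // mulr_gt0 //.
by case/andP: hlam.
Qed.

End Model.


Section Conc.
Context {R : realType} (S : finType).

Lemma amgm (w a : S -> R) : (forall s, 0 <= w s) -> \sum_s w s < 1 -> (forall s, 0 < a s) ->
  expR (\sum_s w s * ln (a s)) <= \sum_s w s * a s + (1 - \sum_s w s).
Proof.
move=> w0 W1 a0.
set W := \sum_s w s; have {W1} W1 : W < 1 by exact: W1.
set M := \sum_s w s * a s + (1 - W).
have M0 : 0 <= \sum_s w s * a s by apply: sumr_ge0 => s _; rewrite mulr_ge0 // ltW.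
have Mp : 0 < M by rewrite /M; lra.
rewrite -[X in _ <= X](lnK Mp) ler_expR.
have H1 : \sum_s w s * ln (a s) <= \sum_s w s * (ln M + a s / M - 1).
  apply: ler_sum => s _; apply: ler_wpM2l => //.
  have := @ln_le_sub1 R (a s / M) (divr_gt0 (a0 s) Mp).
  rewrite ln_div ?posrE //; lra.
have E : \sum_s w s * (ln M + a s / M - 1) = W * ln M + (\sum_s w s * a s) / M - W.
  rewrite (eq_bigr (fun s => w s * ln M + (w s * a s) / M - w s)); last by move=> s _; ring.
  rewrite sumrB big_split /= -mulr_suml -mulr_suml.
  done.
rewrite E in H1.
have H2 : - ln M <= M^-1 - 1.
  have Mi : 0 < M^-1 by rewrite invr_gt0.
  have := @ln_le_sub1 R (M^-1) Mi.
  by rewrite lnV ?posrE.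
have H3 : (1 - W) * (- ln M) <= (1 - W) * (M^-1 - 1) by apply: ler_wpM2l => //; lra.
have E2 : (\sum_s w s * a s) / M = 1 - (1 - W) * M^-1.
  by rewrite /M; field; rewrite gt_eqF.
rewrite E2 in H1.
nra.
Qed.

Lemma gm_concave (w x y : S -> R) (t : R) : (forall s, 0 <= w s) -> \sum_s w s < 1 ->
  (forall s, 1 <= x s) -> (forall s, 1 <= y s) -> 0 <= t <= 1 ->
  t * expR (\sum_s w s * ln (x s)) + (1 - t) * expR (\sum_s w s * ln (y s))
  <= expR (\sum_s w s * ln (t * x s + (1 - t) * y s)).
Proof.
move=> w0 W1 x1 y1 /andP[t0 t1].
set z := fun s => t * x s + (1 - t) * y s.
have z0 : forall s, 0 < z s.
  move=> s; rewrite /z; have := x1 s; have := y1 s; nra.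
set W := \sum_s w s; have {W1} W1 : W < 1 by exact: W1.
set Ez := expR (\sum_s w s * ln (z s)).
have key : forall u : S -> R, (forall s, 0 < u s) ->
    expR (\sum_s w s * ln (u s)) <= Ez * (\sum_s w s * (u s / z s) + (1 - W)).
  move=> u u0.
  have -> : \sum_s w s * ln (u s) = \sum_s w s * ln (z s) + \sum_s w s * ln (u s / z s).
    rewrite -big_split /=; apply: eq_bigr => s _.
    rewrite ln_div ?posrE //; ring.
  rewrite expRD ler_wpM2l ?expR_ge0 //.
  apply: amgm => // s; exact: divr_gt0.
have hx := key x (fun s => lt_le_trans ltr01 (x1 s)).
have hy := key y (fun s => lt_le_trans ltr01 (y1 s)).
have Ez0 : 0 <= Ez by exact: expR_ge0.
have hsum : t * (\sum_s w s * (x s / z s)) + (1 - t) * (\sum_s w s * (y s / z s)) = W.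
  rewrite !mulr_sumr -big_split /=; apply: eq_bigr => s _.
  have zs := z0 s; rewrite /z in zs *.
  by field; rewrite gt_eqF.
apply: le_trans (_ : t * (Ez * (\sum_s w s * (x s / z s) + (1 - W))) +
   (1 - t) * (Ez * (\sum_s w s * (y s / z s) + (1 - W))) <= Ez).
  apply: lerD; apply: ler_wpM2l => //; lra.
have -> : t * (Ez * (\sum_s w s * (x s / z s) + (1 - W))) +
   (1 - t) * (Ez * (\sum_s w s * (y s / z s) + (1 - W))) =
   Ez * ((t * (\sum_s w s * (x s / z s)) + (1 - t) * (\sum_s w s * (y s / z s))) + (1 - W)) by ring.
by rewrite hsum addrCA subrr addr0 mulr1.
Qed.


Lemma prodE1 (x w : S -> R) : (forall s, 1 <= x s) ->
  \prod_s powR (x s) (w s) = expR (\sum_s w s * ln (Num.max (x s) 1)).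
Proof.
move=> x1; rewrite expR_sum; apply: eq_bigr => s _.
rewrite /powR gt_eqF ?(lt_le_trans ltr01 (x1 s)) //.
by rewrite (max_idPl (x1 s)).
Qed.

Lemma prodE2 (x w : S -> R) : (forall s, 0 < x s) ->
  \prod_s powR (x s) (w s) = expR (\sum_s w s * ln (x s)).
Proof.
move=> x0; rewrite expR_sum; apply: eq_bigr => s _.
by rewrite /powR gt_eqF ?x0.
Qed.

End Conc.


Theorem theorem1 (R : realType) (S A : finType)
  (hS : (0 < #|S|)%N) (hA : (0 < #|A|)%N)
  (lam b : R) (hlam : 0 < lam < 1) (hb : 0 < b)
  (r : S -> A -> R) (hr : forall s a, 0 <= r s a)
  (nu : S -> A -> R) (hnu : forall s, simplex (nu s))
  (U : S -> A -> set (S -> R))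
  (hUsimp : forall s a p, U s a p -> simplex p)
  (hUne : forall s a, U s a !=set0)
  (hUmin1 : forall s a (v : S -> R),
      exists2 p, U s a p & forall q, U s a q -> dotp p v <= dotp q v)
  (hUmin2 : forall s a (x : S -> R), (forall s', 0 < x s') ->
      exists2 p, U s a p & forall q, U s a q ->
        \prod_(s' : S) powR (x s') (lam * p s') <= \prod_(s' : S) powR (x s') (lam * q s'))
  (vstar : S -> R) (hfix : forall s, Ttil lam b r nu U vstar s = vstar s) :
  (* (1) vstar is optimal for max { sum_s exp(b v_s) : v <= T~(v) } *)
  ((forall s, vstar s <= Ttil lam b r nu U vstar s) /\
   (forall v : S -> R, (forall s, v s <= Ttil lam b r nu U v s) ->
      \sum_(s : S) expR (b * v s) <= \sum_(s : S) expR (b * vstar s)))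
  /\
  (* (2) the program max { sum_s x_s : x <= t~(x), x >= 1 } is convex
         (closed convex feasible set) and vstar = log_b of its optimal solution *)
  (let feas := [set x : S -> R | (forall s, x s <= ttil lam b r nu U x s) /\
                                 (forall s, 1 <= x s)] in
   @closed {ptws S -> R} feas /\
   (forall x y (t : R), feas x -> feas y -> 0 <= t <= 1 ->
      feas (fun s => t * x s + (1 - t) * y s)) /\
   (exists xstar, feas xstar /\
      forall x, feas x -> \sum_(s : S) x s <= \sum_(s : S) xstar s) /\
   (forall xstar, feas xstar ->
      (forall x, feas x -> \sum_(s : S) x s <= \sum_(s : S) xstar s) ->
      forall s, vstar s = ln (xstar s) / b)).
Proof.
have /card_gt0P [s0 _] := hS.
case/andP: (hlam) => l0 l1.
have hG : forall v s, Ttil lam b r nu U v s = G S A lam b r nu U v s := TtilG S A lam b hb r nu hnu U.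
have hfixG : forall s, G S A lam b r nu U vstar s = vstar s by move=> s; rewrite -hG hfix.
have Key := key S A lam b hlam hb r nu hnu U hUsimp hUmin1 s0 vstar hfixG.
have v0 := vstar_ge0 S A lam b hlam hb r hr nu hnu U hUsimp hUmin1 s0 vstar hfixG.
have tE := ttil_exp S A lam b hlam hb r nu U hUmin1.
have Zp : forall v s, 0 < Z S A lam b r nu U v s.
  by move=> v s; apply: sum_nu_pos => // a; exact: expR_gt0.
have expln : forall x, 0 < x -> expR (b * (ln x / b)) = x.
  by move=> x x0; rewrite mulrC divfK ?gt_eqF // lnK // posrE.
have ZG : forall v s, Z S A lam b r nu U v s = expR (b * G S A lam b r nu U v s).
  by move=> v s; rewrite /G expln.
have feasE : forall x : S -> R, (forall s, 1 <= x s) ->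
   (forall s, x s <= ttil lam b r nu U x s) ->
   (forall s, ln (x s) / b <= G S A lam b r nu U (fun s => ln (x s) / b) s).
  move=> x x1 h s.
  have xe : x = (fun s => expR (b * (ln (x s) / b))).
    by apply: funext => s'; rewrite expln // (lt_le_trans ltr01 (x1 s')).
  have := h s; rewrite {2}xe tE /G ler_pM2r ?invr_gt0 // ler_ln ?posrE ?Zp //.
  exact: (lt_le_trans ltr01 (x1 s)).
split.
  split; first by move=> s; rewrite hfix.
  move=> v hv.
  have hv' : forall s, v s <= G S A lam b r nu U v s by move=> s; rewrite -hG.
  have H := Key v hv'.
  by apply: ler_sum => s _; rewrite ler_expR ler_pM2l.
move=> feas.
pose xs := fun s => expR (b * vstar s).
have feas_le : forall x, feas x -> forall s, x s <= xs s.
  move=> x [hx1 hx2] s.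
  have := Key _ (feasE x hx2 hx1) s.
  move=> h; rewrite /xs -{1}(expln (x s)) ?(lt_le_trans ltr01 (hx2 s)) //.
  by rewrite ler_expR ler_pM2l.
have feas_xs : feas xs.
  split => s.
    by rewrite tE ZG hfixG.
  by rewrite /xs -expR0 ler_expR mulr_ge0 // ltW.
split; last split; last split.
- pose I := (S * (A -> S -> R))%type.
  pose D : set I := fun i => forall a, U i.1 a (i.2 a).
  pose Hf : I -> {ptws S -> R} -> R := fun i x => \sum_a (nu i.1 a * expR (b * r i.1 a)) *
     expR (\sum_s' (lam * i.2 a s') * ln (Num.max (x s') 1)).
  have E : feas = (\bigcap_(s in setT) [set x : {ptws S -> R} | 1 <= x s]) `&`
                  (\bigcap_(i in D) [set x : {ptws S -> R} | x i.1 <= Hf i x]).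
    rewrite /feas; apply/seteqP; split => x /=.
      move=> [h1 h2]; split.
        by move=> s _; exact: h2 s.
      move=> [s P] DP /=.
      apply: le_trans (h1 s) _; rewrite /ttil /Hf /=; apply: ler_sum => a _.
      apply: ler_wpM2l; first by rewrite mulr_ge0 ?expR_ge0 //; case: (hnu s).
      rewrite -(@prodE1 R S x _ h2); apply: (setmin_le _ (DP a)).
      by move=> q _; apply: prodr_ge0 => s' _; exact: powR_ge0.
    move=> [hL hC].
    have x1 : forall s, 1 <= x s by move=> s; exact: (hL s Logic.I).
    have x0 : forall s, 0 < x s by move=> s; exact: (lt_le_trans ltr01 (x1 s)).
    split => // s.
    pose P := fun a => s2val (cid2 (hUmin2 s a x x0)).
    have DP : D (s, P) by move=> a; rewrite /P; exact: s2valP.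
    apply: le_trans (hC (s, P) DP) _; rewrite /Hf /ttil /=; apply: ler_sum => a _.
    apply: ler_wpM2l; first by rewrite mulr_ge0 ?expR_ge0 //; case: (hnu s).
    rewrite -(@prodE1 R S x _ x1) (setmin_min (s2valP (cid2 (hUmin2 s a x x0))) (s2valP' (cid2 (hUmin2 s a x x0)))).
    by [].
  rewrite E; apply: closedI; apply: closed_bigI.
    move=> s _; apply: (@closed_ptws_le R S (fun=> 1) (fun x => x s)).
      exact: cst_continuous.
    exact: cont_proj.
  move=> i _; apply: (@closed_ptws_le R S (fun x => x i.1) (Hf i)).
    exact: cont_proj.
  exact: (cont_sumH S A (fun a => nu i.1 a * expR (b * r i.1 a)) (fun a s' => lam * i.2 a s')).
- move=> x y t [hx1 hx2] [hy1 hy2] /andP[t0 t1].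
  have x0 : forall s, 0 < x s by move=> s; exact: (lt_le_trans ltr01 (hx2 s)).
  have y0 : forall s, 0 < y s by move=> s; exact: (lt_le_trans ltr01 (hy2 s)).
  set z := fun s => t * x s + (1 - t) * y s.
  have z1 : forall s, 1 <= z s by move=> s; rewrite /z; have := hx2 s; have := hy2 s; nra.
  have z0 : forall s, 0 < z s by move=> s; exact: (lt_le_trans ltr01 (z1 s)).
  split => // s.
  have hxy : t * ttil lam b r nu U x s + (1 - t) * ttil lam b r nu U y s <= ttil lam b r nu U z s.
    rewrite /ttil !mulr_sumr -big_split /=; apply: ler_sum => a _.
    have c0 : 0 <= nu s a * expR (b * r s a) by rewrite mulr_ge0 ?expR_ge0 //; case: (hnu s).
    have [pz Uz Hz] := hUmin2 s a z z0.
    rewrite (setmin_min Uz Hz).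
    have nng : forall (u : S -> R) q, U s a q -> 0 <= \prod_s' powR (u s') (lam * q s').
      by move=> u q _; apply: prodr_ge0 => s' _; exact: powR_ge0.
    have mx := setmin_le (f := fun p => \prod_s' powR (x s') (lam * p s')) (nng x) Uz.
    have my := setmin_le (f := fun p => \prod_s' powR (y s') (lam * p s')) (nng y) Uz.
    simpl in mx, my.
    case: (hUsimp _ _ _ Uz) => pz0 pzs.
    have W0 : forall s', 0 <= lam * pz s' by move=> s'; rewrite mulr_ge0 // ltW.
    have W1 : \sum_s' lam * pz s' < 1 by rewrite -mulr_sumr pzs mulr1.
    have t01 : 0 <= t <= 1 by rewrite t0 t1.
    have gc := @gm_concave R S (fun s' => lam * pz s') x y t W0 W1 hx2 hy2 t01.
    rewrite -(@prodE2 R S x _ x0) -(@prodE2 R S y _ y0) -(@prodE2 R S z _ z0) in gc.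
    set c := nu s a * expR (b * r s a).
    set Mx := setmin _ _ in mx *; set My := setmin _ _ in my *.
    have -> : t * (c * Mx) + (1 - t) * (c * My) = c * (t * Mx + (1 - t) * My) by ring.
    apply: ler_wpM2l => //; apply: le_trans _ gc; apply: lerD; apply: ler_wpM2l => //; lra.
  rewrite /z; apply: le_trans _ hxy; apply: lerD; apply: ler_wpM2l; first [exact: hx1 | exact: hy1 | lra].
- by exists xs; split => // x /feas_le h; apply: ler_sum => s _; exact: h.
- move=> xstar fx opt s.
  have hle := feas_le _ fx.
  have hsum := opt _ feas_xs.
  have E : \sum_s (xs s - xstar s) = 0.
    apply/eqP; rewrite eq_le; apply/andP; split; first by rewrite sumrB subr_le0.
    by apply: sumr_ge0 => s' _; rewrite subr_ge0.
  have nn : forall s', xpredT s' -> 0 <= xs s' - xstar s' by move=> s' _; rewrite subr_ge0.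
  have /eqP := @psumr_eq0P R S xpredT (fun s' => xs s' - xstar s') nn E s isT.
  rewrite subr_eq0 => /eqP es.
  by rewrite -es /xs expRK; field; rewrite gt_eqF.
Qed.
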